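(* Let $L\in\mathbb{R}^{N\times N}$ be a nonnegative liabilities matrix, let $\mathbf{e}\in\mathbb{R}^N_{\ge 0}$ be the cash-on-hand vector, and let $C\ge 0$ be a given total cash injection amount. Assume the network is such that for every cash injection vector $\mathbf{c}\ge\mathbf{0}$ the clearing payment vector $\mathbf{p}(\mathbf{c})$ exists and is unique. Then the problem \[ \text{minimize } D=\mathbf{1}^T(\bar{\mathbf p}-\mathbf p(\mathbf c)) \text{ over } \mathbf c\ge \mathbf 0 \text{ with } \mathbf 1^T\mathbf c=C \] has a solution, and one is obtained by solving the linear program \[ \text{maximize } \mathbf 1^T\mathbf p \text{ over } (\mathbf c,\mathbf p)\in\mathbb R^{2N} \] subject to $\mathbf 1^T\mathbf c=C$, $\mathbf c\ge\mathbf 0$, $\mathbf 0\le\mathbf p\le\bar{\mathbf p}$, $\mathbf p\le\Pi^T\mathbf p+\mathbf e+\mathbf c$: namely, if $(\mathbf p^*,\mathbf c^* )$ is an optimal solution of this linear program, then $\mathbf c^*$ attains the minimum of $D$ over all allocations $\mathbf c\ge\mathbf 0$ with $\mathbf 1^T\mathbf c=C$ (and $\mathbf p^*=\mathbf p(\mathbf c^* )$).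
   Context: Financial network model: $N$ nodes; $L_{ij}\ge 0$ is the amount node $i$ owes node $j$, all due at a single date. All vector inequalities are componentwise; $\mathbf 0,\mathbf 1$ are the all-zeros and all-ones vectors in $\mathbb R^N$. $\bar p_i=\sum_j L_{ij}$ is the total amount node $i$ owes. $\Pi_{ij}=L_{ij}/\bar p_i$ if $\bar p_i\neq 0$ and $\Pi_{ij}=0$ otherwise; $\Pi$ is the matrix with entries $\Pi_{ij}$. $\mathbf e\ge\mathbf 0$ is cash on hand and $\mathbf c\ge\mathbf 0$ is external cash injection. Given a payment vector $\mathbf p$ ($p_i$ = total amount node $i$ actually pays its creditors), node $i$ receives $q_i=\sum_j \Pi_{ji}p_j$ and has total funds $r_i=q_i+e_i+c_i$. A clearing payment vector for given $L,\mathbf e,\mathbf c$ is a vector $\mathbf p$ with $p_i=\min(\bar p_i, r_i)$ for every $i$, i.e. $\mathbf p=\min(\bar{\mathbf p},\Pi^T\mathbf p+\mathbf e+\mathbf c)$ componentwise (a node pays its liabilities in full if its funds suffice, otherwise pays all of its funds, distributed to creditors in proportion to the amounts owed). $D=\mathbf 1^T(\bar{\mathbf p}-\mathbf p)$ is the total unpaid liabilities. *)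

(* Defs.v *)
From HB Require Import structures.
From mathcomp Require Import all_boot all_order all_algebra.
Set Implicit Arguments. Unset Strict Implicit. Unset Printing Implicit Defensive.
Import Order.TTheory GRing.Theory Num.Theory.
Local Open Scope ring_scope.

Section Network.
Variables (R : realFieldType) (N : nat).
Implicit Types (L : 'M[R]_N) (v e c p : 'I_N -> R).

Definition pbar L (i : 'I_N) : R := \sum_(j < N) L i j.

Definition Pi L (i j : 'I_N) : R :=
  if pbar L i != 0 then L i j / pbar L i else 0.

Definition funds L e c p (i : 'I_N) : R :=
  \sum_(j < N) Pi L j i * p j + e i + c i.

Definition is_clearing L e c p : Prop :=
  forall i, p i = Num.min (pbar L i) (funds L e c p i).

Definition total_unpaid L p : R := \sum_(i < N) (pbar L i - p i).

Definition admissible (C : R) c : Prop :=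
  (forall i, 0 <= c i) /\ \sum_(i < N) c i = C.

Definition lp_feasible L e (C : R) c p : Prop :=
  admissible C c /\
  (forall i, 0 <= p i /\ p i <= pbar L i) /\
  (forall i, p i <= funds L e c p i).

Definition lp_optimal L e (C : R) c p : Prop :=
  lp_feasible L e C c p /\
  forall c' p', lp_feasible L e C c' p' ->
    \sum_(i < N) p' i <= \sum_(i < N) p i.

End Network.

(* Main.v *)
Require Import Defs.
From HB Require Import structures.
From mathcomp Require Import all_boot all_order all_algebra.
From mathcomp Require Import ring lra.
Import Order.TTheory GRing.Theory Num.Theory.
Local Open Scope ring_scope.

Section FM.
Variables (R : realFieldType) (T : finType).

Definition lhs (a x : T -> R) : R := \sum_v a v * x v.
Definition sat1 (c : (T -> R) * R) (x : T -> R) : bool := lhs c.1 x <= c.2.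
Definition sat (S : seq ((T -> R) * R)) x := all (sat1^~ x) S.
Definition setv (x : T -> R) k t : T -> R := fun v => if v == k then t else x v.
Definition rest k (a x : T -> R) : R := \sum_(v | v != k) a v * x v.

Lemma lhs_split k a x : lhs a x = a k * x k + rest k a x.
Proof. by rewrite /lhs (bigD1 k). Qed.

Lemma rest_set k a x t : rest k a (setv x k t) = rest k a x.
Proof. by apply: eq_bigr => v /negbTE; rewrite /setv => ->. Qed.

Lemma lhs_set k a x t : lhs a (setv x k t) = a k * t + rest k a x.
Proof. by rewrite (lhs_split k) rest_set /setv eqxx. Qed.

Definition comb k (p q : (T -> R) * R) : (T -> R) * R :=
  (fun v => (- q.1 k) * p.1 v + p.1 k * q.1 v, (- q.1 k) * p.2 + p.1 k * q.2).

Lemma lhs_comb k p q x : lhs (comb k p q).1 x = (- q.1 k) * lhs p.1 x + p.1 k * lhs q.1 x.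
Proof.
rewrite /lhs /= !mulr_sumr -big_split /=; apply: eq_bigr => v _.
by rewrite mulrDl !mulrA.
Qed.

Lemma rest_comb k p q x : rest k (comb k p q).1 x = (- q.1 k) * rest k p.1 x + p.1 k * rest k q.1 x.
Proof.
rewrite /rest /= !mulr_sumr -big_split /=; apply: eq_bigr => v _.
by rewrite mulrDl !mulrA.
Qed.

Definition elim1 k (S : seq ((T -> R) * R)) :=
  [seq c <- S | c.1 k == 0] ++
  [seq comb k p q | p <- [seq c <- S | 0 < c.1 k], q <- [seq c <- S | c.1 k < 0]].

Lemma all_allpairs (A B C : Type) (f : A -> B -> C) (P : pred C) s t :
  all P [seq f a b | a <- s, b <- t] = all (fun a => all (fun b => P (f a b)) t) s.
Proof.
elim: s => //= a s IH; by rewrite all_cat all_map IH.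
Qed.

Lemma exists_max (s : seq R) : s != [::] -> exists m, m \in s /\ all (fun y => y <= m) s.
Proof.
elim: s => // a s IH _; case: s IH => [|b s] IH.
  by exists a; rewrite /= mem_seq1 lexx.
have [//|m [ms hm]] := IH.
case: (leP a m) => ham.
  by exists m; rewrite inE ms orbT /= ham.
have h2 : all (fun y => y <= a) (b :: s).
  by apply: sub_all hm => y hy; exact: le_trans hy (ltW ham).
by exists a; split; [rewrite inE eqxx | rewrite /= lexx; exact h2].
Qed.

Lemma exists_min (s : seq R) : s != [::] -> exists m, m \in s /\ all (fun y => m <= y) s.
Proof.
elim: s => // a s IH _; case: s IH => [|b s] IH.
  by exists a; rewrite /= mem_seq1 lexx.
have [//|m [ms hm]] := IH.
case: (leP m a) => ham.
  by exists m; rewrite inE ms orbT /= ham.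
have h2 : all (fun y => a <= y) (b :: s).
  by apply: sub_all hm => y hy; exact: le_trans (ltW ham) hy.
by exists a; split; [rewrite inE eqxx | rewrite /= lexx; exact h2].
Qed.

Lemma exists_between (ls us : seq R) :
  all (fun u => all (fun l => l <= u) ls) us ->
  exists t, all (fun l => l <= t) ls /\ all (fun u => t <= u) us.
Proof.
move=> H; case: (eqVneq ls [::]) => [->|nls].
  case: (eqVneq us [::]) => [->|nus]; first by exists 0.
  by have [m [_ hm]] := @exists_min us nus; exists m.
have [m [ms hm]] := @exists_max ls nls; exists m; split=> //.
by apply: sub_all H => u /allP; apply.
Qed.

Lemma allIn (A : Type) (P : pred A) s : all P s <-> (forall c, List.In c s -> P c).
Proof.
elim: s => [|a s IH] /=; first by split.
split.
  by move=> /andP[Pa /IH H] c [<-|/H].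
move=> H; rewrite H; last by left.
by apply/IH => c cs; apply: H; right.
Qed.

Lemma InF (A : Type) (f : pred A) c s : List.In c s -> f c -> List.In c (filter f s).
Proof.
elim: s => //= a s IH [<- ->|/IH H fc]; first by left.
by case: (f a) => //; [right; apply: H | apply: H].
Qed.

Lemma elim1P k S x : sat (elim1 k S) x <-> exists t, sat S (setv x k t).
Proof.
split.
- rewrite /sat /elim1 all_cat all_allpairs all_filter => /andP[/allIn Hz /allIn Hc].
  pose U (c : (T -> R) * R) := (c.2 - rest k c.1 x) / c.1 k.
  pose Lo (c : (T -> R) * R) := (rest k c.1 x - c.2) / (- c.1 k).
  have H : all (fun u => all (fun l => l <= u) [seq Lo c | c <- S & c.1 k < 0])
             [seq U c | c <- S & 0 < c.1 k].
    rewrite all_map all_filter; apply/allIn => p Sp; apply/implyP => Hp.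
    rewrite /= all_map all_filter; apply/allIn => q Sq; apply/implyP => Hq.
    have := Hc p (@InF _ _ _ _ Sp Hp); rewrite all_filter => /allIn /(_ q Sq) /implyP /(_ Hq).
    rewrite /sat1 (lhs_split k) /= (_ : _ * _ + _ * _ = 0) ?mul0r ?add0r; last first.
      by rewrite /=; ring.
    rewrite rest_comb => Hpq.
    have nq : 0 < - q.1 k by rewrite oppr_gt0.
    rewrite /U /Lo /= ler_pdivrMr // mulrAC ler_pdivlMr //.
    set a := q.1 k in Hpq nq *; set b := p.1 k in Hpq Hp *; nra.
  have [t [Hl Hu]] := @exists_between _ _ H.
  exists t; rewrite /sat.
  move: Hl Hu; rewrite !all_map !all_filter => /allIn Hl /allIn Hu.
  apply/allIn => c cS.
  rewrite /sat1 lhs_set.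
  case: (ltgtP (c.1 k) 0) => hc.
  + have := Hl c cS; rewrite /= hc /= /Lo ler_pdivrMr ?oppr_gt0 // => h.
    nra.
  + have := Hu c cS; rewrite /= hc /= /U ler_pdivlMr // => h.
    nra.
  + have := Hz c cS; rewrite /= hc eqxx /= /sat1 (lhs_split k) hc !mul0r !add0r //.
- case=> t; rewrite /sat /elim1 all_cat all_allpairs => /allIn H.
  apply/andP; split.
    rewrite all_filter; apply/allIn => c cS; apply/implyP => /eqP hc; have := H c cS.
    by rewrite /sat1 lhs_set (lhs_split k) hc !mul0r !add0r.
  rewrite all_filter; apply/allIn => p pS; apply/implyP => Hp.
  rewrite all_filter; apply/allIn => q qS; apply/implyP => Hq.
  rewrite /sat1 (lhs_split k) /= (_ : _ * _ + _ * _ = 0) ?mul0r ?add0r; last first.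
    by rewrite /=; ring.
  rewrite -(rest_set k _ x t) rest_comb.
  have := H p pS; have := H q qS; rewrite /sat1 !lhs_set => h1 h2.
  have nq : 0 < - q.1 k by rewrite oppr_gt0.
  rewrite !rest_set.
  have e1 := ler_wpM2l (ltW nq) h2; have e2 := ler_wpM2l (ltW Hp) h1.
  nra.
Qed.

Fixpoint elims (ks : seq T) S :=
  match ks with [::] => S | k :: ks' => elim1 k (elims ks' S) end.

Lemma elimsP ks S x :
  sat (elims ks S) x <-> exists y, (forall v, v \notin ks -> y v = x v) /\ sat S y.
Proof.
elim: ks x => [|k ks IH] x /=.
  split; first by move=> H; exists x.
  case=> y [Hy HS]; apply: sub_all HS => c; rewrite /sat1 /lhs.
  by rewrite (eq_bigr (fun v => c.1 v * x v)) // => v _; rewrite Hy.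
rewrite elim1P; split.
  case=> t /IH [y [Hy HS]]; exists y; split=> // v; rewrite inE negb_or => /andP[vk vks].
  by rewrite Hy // /setv (negbTE vk).
case=> y [Hy HS]; exists (y k); apply/IH; exists y; split=> // v vks.
rewrite /setv; case: eqP => [->//|/eqP vk]; apply: Hy.
by rewrite inE negb_or vk.
Qed.

Lemma lp_max z S M y0 : sat S y0 -> (forall y, sat S y -> y z <= M) ->
  exists y, sat S y /\ forall y', sat S y' -> y' z <= y z.
Proof.
move=> Hy0 HM.
pose ks := [seq v <- enum T | v != z].
have Hks v : (v \notin ks) = (v == z) by rewrite mem_filter mem_enum andbT negbK.
pose E := elims ks S.
have ZP t : sat E (fun _ => t) <-> exists y, y z = t /\ sat S y.
  rewrite elimsP; split.
    by case=> y [Hy HS]; exists y; split=> //; apply: Hy; rewrite Hks.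
  case=> y [Hy HS]; exists y; split=> // v; rewrite Hks => /eqP ->; exact Hy.
pose al (c : (T -> R) * R) := \sum_v c.1 v.
have ZE t : sat E (fun _ => t) = all (fun c => al c * t <= c.2) E.
  by apply: eq_all => c; rewrite /sat1 /lhs /al mulr_suml.
have Z0 : sat E (fun _ => y0 z) by apply/ZP; exists y0.
case: (boolP (has (fun c => 0 < al c) E)) => hh; last first.
  have HE : sat E (fun _ => M + 1).
    move: Z0 hh; rewrite !ZE -all_predC => /allIn H0 /allIn H1; apply/allIn => c cE.
    have := H1 c cE; rewrite /= -leNgt => hc.
    apply: le_trans (H0 c cE); apply: ler_wnM2l => //.
    by have := HM _ Hy0; lra.
  have [y [yz /HM]] := iffLR (ZP _) HE; rewrite yz; lra.
pose us := [seq c.2 / al c | c <- E & 0 < al c].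
have nus : us != [::].
  by rewrite -size_eq0 size_map size_filter -lt0n -has_count.
have Zus t : sat E (fun _ => t) -> all (fun u => t <= u) us.
  rewrite ZE => /allIn H; rewrite all_map all_filter; apply/allIn => c cE.
  by apply/implyP => hc /=; rewrite ler_pdivlMr // mulrC; apply: H.
have [m [mus mall]] := @exists_min us nus.
have Hm : sat E (fun _ => m).
  rewrite ZE; apply/allIn => c cE.
  case: (ltgtP (al c) 0) => hc.
  - have t0m : y0 z <= m by move/allP: (Zus _ Z0); apply.
    move: Z0; rewrite ZE => /allIn /(_ c cE) /= h.
    by apply: le_trans h; apply: ler_wnM2l => //; apply: ltW.
  - move: mall; rewrite all_map all_filter => /allIn /(_ c cE) /implyP /(_ hc) /=.
    by rewrite ler_pdivlMr // mulrC.
  - move: Z0; rewrite ZE => /allIn /(_ c cE) /=; by rewrite hc !mul0r.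
have [y [yz HS]] := iffLR (ZP _) Hm.
exists y; split=> // y' Hy'.
have : sat E (fun _ => y' z) by apply/ZP; exists y'.
by move/Zus/allP => /(_ m mus); rewrite yz.
Qed.

End FM.
Arguments lhs {R T} a x.
Arguments sat1 {R T} c x.
Arguments sat {R T} S x.
Arguments lp_max {R T} z S M y0.

Section Net.
Variables (R : realFieldType) (N : nat) (L : 'M[R]_N) (e : 'I_N -> R) (C : R).
Hypothesis HL : forall i j, 0 <= L i j.
Hypothesis He : forall i, 0 <= e i.

Lemma pbar_ge0 i : 0 <= pbar L i.
Proof. by apply: sumr_ge0 => j _. Qed.

Lemma Pi_ge0 i j : 0 <= Pi L i j.
Proof. by rewrite /Pi; case: ifP => // _; apply: divr_ge0 => //; apply: pbar_ge0. Qed.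

Lemma funds_mono c p q i : (forall j, p j <= q j) -> funds L e c p i <= funds L e c q i.
Proof.
move=> H; rewrite /funds lerD2r lerD2r; apply: ler_sum => j _.
by apply: ler_wpM2l; [apply: Pi_ge0 | apply: H].
Qed.

Lemma sum_delta (F : 'I_N -> R) k d : \sum_j F j * ((j == k)%:R * d) = F k * d.
Proof.
rewrite (bigD1 k) //= eqxx mul1r big1 ?addr0 // => j /negbTE ->.
by rewrite mul0r mulr0.
Qed.

Lemma funds_bump c p k d i :
  funds L e c (fun j => p j + (j == k)%:R * d) i = funds L e c p i + Pi L k i * d.
Proof.
rewrite /funds (eq_bigr (fun j => Pi L j i * p j + Pi L j i * ((j == k)%:R * d))).
  by rewrite big_split /= sum_delta; ring.
by move=> j _; rewrite mulrDr.
Qed.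

Lemma part2 c p : lp_optimal L e C c p ->
  is_clearing L e c p /\
  forall c' p', admissible C c' -> is_clearing L e c' p' ->
    total_unpaid L p <= total_unpaid L p'.
Proof.
move=> [[Ha [Hb Hf]] Hopt]; split.
  move=> i; have : p i <= Num.min (pbar L i) (funds L e c p i).
    by rewrite le_min (Hb i).2 Hf.
  rewrite le_eqVlt => /orP[/eqP //|hlt]; exfalso.
  pose d := Num.min (pbar L i) (funds L e c p i) - p i.
  have dpos : 0 < d by rewrite /d subr_gt0.
  pose p' := fun j => p j + (j == i)%:R * d.
  have Hfeas : lp_feasible L e C c p'.
    split=> //; split=> j.
      rewrite /p'; case: (eqVneq j i) => [->|ji]; last first.
        by rewrite mul0r addr0; apply: Hb.
      rewrite mul1r /d addrC subrK; split.
        by rewrite le_min pbar_ge0 /=; apply: le_trans (Hf i); apply: (Hb i).1.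
      by rewrite ge_min lexx.
    rewrite funds_bump.
    have h0 : funds L e c p j <= funds L e c p j + Pi L i j * d.
      by rewrite lerDl; apply: mulr_ge0; [apply: Pi_ge0 | apply: ltW].
    apply: le_trans h0; rewrite /p'; case: (eqVneq j i) => [->|ji].
      by rewrite mul1r /d addrC subrK ge_min lexx orbT.
    by rewrite mul0r addr0.
  have := Hopt _ _ Hfeas; rewrite /p' big_split /=.
  have hs : \sum_j (j == i)%:R * d = d.
    rewrite -[RHS]mul1r -(sum_delta (fun _ => 1) i d); apply: eq_bigr => j _.
    by rewrite mul1r.
  rewrite hs; lra.
move=> c' p' Hc' Hp'.
pose q := fun i => Num.max (p' i) 0.
have pq j : p' j <= q j by rewrite le_max lexx.
have Hfeas : lp_feasible L e C c' q.
  split=> //; split=> i.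
    split; first by rewrite le_max lexx orbT.
    by rewrite ge_max pbar_ge0 andbT Hp' ge_min lexx.
  rewrite ge_max; apply/andP; split.
    apply: (le_trans _ (@funds_mono c' p' q i pq)); rewrite Hp' ge_min lexx orbT //.
  rewrite /funds; apply: addr_ge0; [apply: addr_ge0|]; last by case: Hc'.
    apply: sumr_ge0 => j _; apply: mulr_ge0; [apply: Pi_ge0|]; by rewrite le_max lexx orbT.
  by [].
have := Hopt _ _ Hfeas.
have : \sum_i p' i <= \sum_i q i by apply: ler_sum => j _.
rewrite /total_unpaid !sumrB; lra.
Qed.

Definition Tv := ('I_N + 'I_N + unit)%type.
Definition cof (y : Tv -> R) i := y (inl (inl i)).
Definition pof (y : Tv -> R) i := y (inl (inr i)).
Definition zv : Tv := inr tt.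
Definition mk (ac ap : 'I_N -> R) (az : R) : Tv -> R := fun v =>
  match v with inl (inl i) => ac i | inl (inr i) => ap i | inr _ => az end.
Definition mky := mk.
Definition dl (i : 'I_N) (a : R) := fun j : 'I_N => (j == i)%:R * a.
Definition zr := fun _ : 'I_N => (0 : R).
Definition on := fun _ : 'I_N => (1 : R).

Lemma lhs_mk ac ap az y : lhs (mk ac ap az) y =
  \sum_i ac i * cof y i + \sum_i ap i * pof y i + az * y zv.
Proof.
have su (F : unit -> R) : \sum_(v : unit) F v = F tt.
  by rewrite (bigD1 tt) //= big1 ?addr0 // => -[]; rewrite eqxx.
by rewrite /lhs !big_sumType /= su.
Qed.

Lemma sum_dl i a (x : 'I_N -> R) : \sum_j dl i a j * x j = a * x i.
Proof.
rewrite (bigD1 i) //= /dl eqxx mul1r big1 ?addr0 // => j /negbTE ->.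
by rewrite mul0r mul0r.
Qed.

Lemma sum_zr (x : 'I_N -> R) : \sum_j zr j * x j = 0.
Proof. by rewrite big1 // => j _; rewrite mul0r. Qed.

Lemma sum_on (x : 'I_N -> R) : \sum_j on j * x j = \sum_j x j.
Proof. by apply: eq_bigr => j _; rewrite mul1r. Qed.

Lemma sum_non (x : 'I_N -> R) : \sum_j - on j * x j = - \sum_j x j.
Proof. by rewrite -sumrN; apply: eq_bigr => j _; rewrite mulN1r. Qed.

Lemma sum_fu i (x : 'I_N -> R) :
  \sum_j ((j == i)%:R - Pi L j i) * x j = x i - \sum_j Pi L j i * x j.
Proof.
rewrite (eq_bigr (fun j => dl i 1 j * x j - Pi L j i * x j)).
  by rewrite sumrB sum_dl mul1r.
by move=> j _; rewrite mulrBl /dl mulr1.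
Qed.

Definition Ssys : seq ((Tv -> R) * R) :=
 [seq (mk (dl i (-1)) zr 0, 0) | i <- enum 'I_N] ++
 [seq (mk zr (dl i (-1)) 0, 0) | i <- enum 'I_N] ++
 [seq (mk zr (dl i 1) 0, pbar L i) | i <- enum 'I_N] ++
 [seq (mk (dl i (-1)) (fun j => (j == i)%:R - Pi L j i) 0, e i) | i <- enum 'I_N] ++
 [:: (mk on zr 0, C); (mk (fun j => - on j) zr 0, -C);
     (mk zr (fun j => - on j) 1, 0); (mk zr on (-1), 0)].

Lemma allI (P : pred 'I_N) : all P (enum 'I_N) <-> forall i, P i.
Proof.
split; first by move/allP => H i; apply: H; rewrite mem_enum.
by move=> H; apply/allP => i _; apply: H.
Qed.

Lemma sat_feas c p : lp_feasible L e C c p -> sat Ssys (mky c p (\sum_i p i)).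
Proof.
move=> [[Hc0 HcC] [Hb Hf]].
rewrite /sat /Ssys !all_cat !all_map.
apply/and5P; split.
- apply/allP => i _ /=; rewrite /sat1 /= lhs_mk sum_dl sum_zr /cof /=; have := Hc0 i; lra.
- apply/allP => i _ /=; rewrite /sat1 /= lhs_mk sum_dl sum_zr /pof /=; have := (Hb i).1; lra.
- apply/allP => i _ /=; rewrite /sat1 /= lhs_mk sum_dl sum_zr /pof /=; have := (Hb i).2; lra.
- apply/allP => i _ /=; rewrite /sat1 /= lhs_mk sum_dl sum_fu /pof /cof /=; have := Hf i.
  rewrite /funds; lra.
- rewrite /= /sat1 /= !lhs_mk !sum_zr !sum_on !sum_non /cof /pof /zv /=.
  rewrite HcC; apply/and5P; split => //; lra.
Qed.

Lemma feas_sat y : sat Ssys y -> lp_feasible L e C (cof y) (pof y) /\ y zv = \sum_i pof y i.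
Proof.
rewrite /sat /Ssys !all_cat !all_map.
case/and5P => /allP H1 /allP H2 /allP H3 /allP H4.
rewrite /= /sat1 /= !lhs_mk !sum_zr !sum_on !sum_non => /and5P [h1 h2 h3 h4 _].
split; last by lra.
split.
  split; last by lra.
  by move=> i; have := H1 i (mem_index_enum i); rewrite /= /sat1 /= lhs_mk sum_dl sum_zr; lra.
split=> i.
  by have := H2 i (mem_index_enum i); have := H3 i (mem_index_enum i); rewrite /= /sat1 /= !lhs_mk !sum_dl !sum_zr; lra.
by have := H4 i (mem_index_enum i); rewrite /= /sat1 /= lhs_mk sum_dl sum_fu /funds; lra.
Qed.

End Net.
Arguments Ssys {R N} L e C.
Arguments feas_sat {R N L e C y}.
Arguments sat_feas {R N L e C c p}.
Arguments part2 {R N L e C} HL He {c p}.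
Arguments pbar_ge0 {R N L} HL i.
Arguments cof {R N} y i.
Arguments pof {R N} y i.
Arguments mky {R N}.

Theorem theorem1 (R : realFieldType) (N : nat) (L : 'M[R]_N)
    (e : 'I_N -> R) (C : R)
    (HN : (0 < N)%N)
    (HL : forall i j, 0 <= L i j)
    (He : forall i, 0 <= e i)
    (HC : 0 <= C)
    (Huniq : forall c : 'I_N -> R, (forall i, 0 <= c i) ->
       exists! p : 'I_N -> R, is_clearing L e c p) :
  (* the minimization problem has a solution *)
  (exists c : 'I_N -> R, admissible C c /\
     forall (p : 'I_N -> R) (c' p' : 'I_N -> R),
       is_clearing L e c p -> admissible C c' -> is_clearing L e c' p' ->
       total_unpaid L p <= total_unpaid L p')
  /\
  (* any optimal solution of the LP yields a minimizer *)
  (forall c p : 'I_N -> R, lp_optimal L e C c p ->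
     is_clearing L e c p /\
     forall c' p' : 'I_N -> R, admissible C c' -> is_clearing L e c' p' ->
       total_unpaid L p <= total_unpaid L p').
Proof.
split; last by move=> c p; exact: (part2 HL He).
pose i0 : 'I_N := Ordinal HN.
pose c0 := fun i : 'I_N => if i == i0 then C else 0.
have adm0 : admissible C c0.
  split; first by move=> i; rewrite /c0; case: ifP.
  rewrite (bigD1 i0) //= /c0 eqxx big1 ?addr0 // => j /negbTE -> //.
have feas0 : lp_feasible L e C c0 (fun _ => 0).
  split=> //; split=> i; first by rewrite lexx (pbar_ge0 HL).
  rewrite /funds big1 ?add0r; last by move=> j _; rewrite mulr0.
  by apply: addr_ge0 => //; case: adm0.
have bound : forall y, sat (Ssys L e C) y -> y (zv N) <= \sum_i pbar L i.
  move=> y /feas_sat [[_ [Hb _]] ->]; apply: ler_sum => i _; exact: (Hb i).2.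
have [y [Sy Hmax]] := lp_max (zv N) (Ssys L e C) _ _ (sat_feas feas0) bound.
have [Fy Ez] := feas_sat Sy.
have opt : lp_optimal L e C (cof y) (pof y).
  split=> // c' p' F'; have := Hmax _ (sat_feas F'); rewrite Ez //.
have [Hcl Hmin] := part2 HL He opt.
exists (cof y); split; first by case: Fy.
move=> p c' p' Hp Hc' Hp'.
have [q [_ Hu]] := Huniq (cof y) (Fy.1.1).
have e1 := Hu _ Hp; have e2 := Hu _ Hcl.
have -> : p = pof y by rewrite -e1 -e2.
exact: (Hmin c' p' Hc' Hp').
Qed.
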